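(* Let $\sigma_w^2=0$. Then $(\alpha,\sigma^2)=(1,0)$ is a fixed point of the real SE map. Let $\delta_{\mathrm{global}}:=1+\frac{4}{\pi^2}$. If $\delta>\delta_{\mathrm{global}}$, there exist $\epsilon_1>0,\epsilon_2>0$ such that for all $\alpha_0\in(1-\epsilon_1,1)$ and $\sigma_0^2\in(0,\epsilon_2)$ the real SE sequences satisfy $\alpha_t\to1$, $\sigma_t^2\to0$. If $\delta<\delta_{\mathrm{global}}$, the real SE sequences cannot converge to $(1,0)$ unless $(\alpha_0,\sigma_0^2)=(1,0)$.
   Context: Real state evolution. Fix $\delta>0$, $\sigma_w^2\ge0$. For $\alpha\in\mathbb{R}$, $\sigma^2\ge0$, $(\alpha,\sigma^2)\ne(0,0)$, with $\sigma=\sqrt{\sigma^2}$ and the convention $\arctan(\alpha/0)=\frac\pi2\,\mathrm{sign}(\alpha)$, define $$\psi_1(\alpha,\sigma^2)=\frac2\pi\arctan\Big(\frac\alpha\sigma\Big),\qquad \psi_2(\alpha,\sigma^2;\delta,\sigma_w^2)=\frac1\delta\Big[\alpha^2+\sigma^2+1-\frac{4\sigma}{\pi}-\frac{4\alpha}{\pi}\arctan\Big(\frac\alpha\sigma\Big)\Big]+\sigma_w^2 .$$ The real SE sequences are $\alpha_{t+1}=\psi_1(\alpha_t,\sigma_t^2)$, $\sigma_{t+1}^2=\psi_2(\alpha_t,\sigma_t^2;\delta,\sigma_w^2)$, $t\ge0$. *)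

(* Defs.v *)
From Stdlib Require Import Reals.
Open Scope R_scope.

Definition sgn (x : R) : R :=
  if Rlt_dec 0 x then 1 else if Rlt_dec x 0 then -1 else 0.

Definition arctan_ratio (alpha sigma : R) : R :=
  if Req_EM_T sigma 0 then PI / 2 * sgn alpha else atan (alpha / sigma).

Definition psi1 (alpha s2 : R) : R :=
  2 / PI * arctan_ratio alpha (sqrt s2).

Definition psi2 (alpha s2 delta sw2 : R) : R :=
  / delta * (alpha ^ 2 + s2 + 1 - 4 * sqrt s2 / PI
             - 4 * alpha / PI * arctan_ratio alpha (sqrt s2)) + sw2.

Fixpoint SE (delta sw2 alpha0 s0 : R) (t : nat) : R * R :=
  match t with
  | O => (alpha0, s0)
  | S t' => let p := SE delta sw2 alpha0 s0 t' in
            (psi1 (fst p) (snd p), psi2 (fst p) (snd p) delta sw2)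
  end.

Definition delta_global : R := 1 + 4 / PI ^ 2.

(* Main.v *)
Require Import Defs.
From Stdlib Require Import Reals Lra Psatz Lia.
Open Scope R_scope.

Lemma PI_gt3 : 3 < PI.
Proof. pose proof PI2_3_2. lra. Qed.

Lemma ar_pos (a s : R) : 0 < a -> 0 <= s -> arctan_ratio a s = PI / 2 - atan (s / a).
Proof.
  intros Ha Hs. unfold arctan_ratio, sgn.
  destruct (Req_EM_T s 0) as [->|Hne].
  - destruct (Rlt_dec 0 a); [|lra]. replace (0 / a) with 0 by (field; lra). rewrite atan_0. lra.
  - replace (a / s) with (/ (s / a)) by (field; lra).
    apply atan_inv. apply Rdiv_lt_0_compat; lra.
Qed.

Lemma ar_opp (a s : R) : arctan_ratio (- a) s = - arctan_ratio a s.
Proof.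
  unfold arctan_ratio, sgn.
  destruct (Req_EM_T s 0).
  - destruct (Rlt_dec 0 (-a)); destruct (Rlt_dec 0 a); try lra;
    destruct (Rlt_dec (-a) 0); destruct (Rlt_dec a 0); lra.
  - replace (- a / s) with (- (a / s)) by (field; auto). apply atan_opp.
Qed.

Lemma ar_zero (s : R) : arctan_ratio 0 s = 0.
Proof.
  unfold arctan_ratio, sgn. destruct (Req_EM_T s 0).
  - destruct (Rlt_dec 0 0); [lra|]. destruct (Rlt_dec 0 0); lra.
  - replace (0 / s) with 0 by (field; auto). apply atan_0.
Qed.

Lemma atan_mvt (y : R) : 0 <= y -> y / (1 + y ^ 2) <= atan y <= y.
Proof.
  intros Hy. destruct (Req_dec y 0) as [->|Hne].
  - rewrite atan_0. unfold Rdiv. rewrite Rmult_0_l. lra.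
  - destruct (MVT_cor2 atan (fun c => / (1 + c ^ 2)) 0 y) as [c [Hc1 Hc2]].
    + lra.
    + intros c _. apply derivable_pt_lim_atan.
    + rewrite atan_0 in Hc1.
      assert (H1 : 0 < 1 + c ^ 2) by nra.
      assert (H2 : 1 + c ^ 2 <= 1 + y ^ 2) by nra.
      assert (H3 : / (1 + c ^ 2) <= 1).
      { rewrite <- Rinv_1. apply Rinv_le_contravar; nra. }
      assert (H4 : / (1 + y ^ 2) <= / (1 + c ^ 2)).
      { apply Rinv_le_contravar; nra. }
      split.
      * unfold Rdiv. rewrite Rmult_comm. nra.
      * nra.
Qed.

Lemma atan_sqrt (y : R) : 0 <= y -> y / sqrt (1 + y ^ 2) <= atan y.
Proof.
  intros Hy. replace (y ^ 2) with (Rsqr y) by (unfold Rsqr; ring).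
  rewrite <- sin_atan. destruct (Req_dec y 0) as [->|Hne].
  - rewrite atan_0, sin_0. lra.
  - left. apply sin_lt_x. assert (atan 0 < atan y) by (apply atan_increasing; lra).
    rewrite atan_0 in H. exact H.
Qed.

Lemma rep (a s d : R) : 0 < a -> 0 <= s -> d <> 0 ->
  psi1 a s = 1 - 2 / PI * atan (sqrt s / a) /\
  psi2 a s d 0 = / d * ((1 - a) ^ 2 + s - 4 / PI * (sqrt s - a * atan (sqrt s / a))).
Proof.
  intros Ha Hs Hd. pose proof PI_gt3.
  unfold psi1, psi2. rewrite ar_pos by (auto; apply sqrt_pos).
  split; field; lra.
Qed.

Lemma E_nonneg (a s : R) : 0 < a -> 0 <= s ->
  0 <= (1 - a) ^ 2 + s - 4 / PI * (sqrt s - a * atan (sqrt s / a)).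
Proof.
  intros Ha Hs. pose proof PI_gt3.
  set (sg := sqrt s).
  assert (Hsg : 0 <= sg) by apply sqrt_pos.
  assert (Hss : s = sg ^ 2) by (unfold sg; simpl; rewrite Rmult_1_r, sqrt_sqrt; lra).
  set (y := sg / a).
  assert (Hy : 0 <= y) by (unfold y; unfold Rdiv; apply Rmult_le_pos; [lra|left; apply Rinv_0_lt_compat; lra]).
  assert (Hsy : sg = a * y) by (unfold y; field; lra).
  set (q := sqrt (1 + y ^ 2)).
  assert (Hq2 : q * q = 1 + y ^ 2) by (unfold q; apply sqrt_sqrt; nra).
  assert (Hq0 : 0 <= q) by apply sqrt_pos.
  assert (Hq1 : 1 <= q) by nra.
  assert (Hyq : y <= q) by nra.
  pose proof (atan_sqrt y Hy) as Hat. fold q in Hat.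
  set (w := 1 - / q).
  assert (Hqw : q * w = q - 1) by (unfold w; field; lra).
  assert (Hw0 : 0 <= w).
  { unfold w. assert (/ q <= 1). { rewrite <- Rinv_1. apply Rinv_le_contravar; lra. } lra. }
  assert (Haphi : a * atan y >= sg * / q).
  { assert (y / q = y * / q) by reflexivity. rewrite Hsy.
    assert (0 < /q) by (apply Rinv_0_lt_compat; lra). nra. }
  assert (Hdiff : sg - a * atan y <= sg * w) by (unfold w; nra).
  assert (Hsw : 0 <= sg * w) by nra.
  assert (H4 : 4 / PI <= 2).
  { apply (Rmult_le_reg_r PI); [lra|]. unfold Rdiv. rewrite Rmult_assoc, Rinv_l; lra. }
  assert (H4p : 0 < 4 / PI) by (apply Rdiv_lt_0_compat; lra).
  assert (Hstep : 4 / PI * (sg - a * atan y) <= 2 * (sg * w)).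
  { apply Rle_trans with (4 / PI * (sg * w)).
    - apply Rmult_le_compat_l; lra.
    - apply Rmult_le_compat_r; lra. }
  assert (Hyw : y * w <= q - 1) by nra.
  assert (Hfin : 0 <= (1 - a) ^ 2 + s - 2 * (sg * w)).
  { rewrite Hss, Hsy. assert (a * y * w <= a * (q - 1)) by nra.
    pose proof (pow2_ge_0 (a * q - 1)).
    assert (a ^ 2 * (q * q) = a ^ 2 * (1 + y ^ 2)) by (rewrite Hq2; reflexivity). nra. }
  fold y. lra.
Qed.

Lemma psi2_nonneg (a s d : R) : 0 <= s -> 0 < d -> 0 <= psi2 a s d 0.
Proof.
  intros Hs Hd.
  assert (Hd' : 0 < / d) by (apply Rinv_0_lt_compat; lra).
  destruct (Rtotal_order a 0) as [Hlt|[Heq|Hgt]].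
  - assert (E : psi2 a s d 0 = psi2 (- a) s d 0).
    { unfold psi2. rewrite ar_opp. pose proof PI_gt3. field; lra. }
    rewrite E. destruct (rep (-a) s d) as [_ ->]; try lra.
    pose proof (E_nonneg (-a) s). nra.
  - subst. unfold psi2. rewrite ar_zero. pose proof PI_gt3.
    set (sg := sqrt s).
    assert (Hsg : 0 <= sg) by apply sqrt_pos.
    assert (Hss : s = sg ^ 2) by (unfold sg; simpl; rewrite Rmult_1_r, sqrt_sqrt; lra).
    assert (H4 : 4 / PI <= 2).
    { apply (Rmult_le_reg_r PI); [lra|]. unfold Rdiv. rewrite Rmult_assoc, Rinv_l; lra. }
    assert (4 * sg / PI = 4 / PI * sg) by (field; lra).
    assert (4 / PI * sg <= 2 * sg) by (apply Rmult_le_compat_r; lra).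
    replace (4 * 0 / PI * 0) with 0 by (field; lra).
    pose proof (pow2_ge_0 (sg - 1)).
    assert (0 <= 0 ^ 2 + s + 1 - 4 * sg / PI - 0) by nra.
    nra.
  - destruct (rep a s d) as [_ ->]; try lra.
    pose proof (E_nonneg a s). nra.
Qed.

Lemma back (a s d : R) : 0 <= s -> 0 < d -> psi1 a s = 1 -> psi2 a s d 0 = 0 -> a = 1 /\ s = 0.
Proof.
  intros Hs Hd H1 H2. pose proof PI_gt3.
  assert (Har : arctan_ratio a (sqrt s) = PI / 2).
  { unfold psi1 in H1. apply (Rmult_eq_reg_l (2 / PI)).
    - rewrite H1. field; lra.
    - apply Rgt_not_eq, Rlt_gt, Rdiv_lt_0_compat; lra. }
  assert (Hsq : sqrt s = 0).
  { unfold arctan_ratio in Har. destruct (Req_EM_T (sqrt s) 0); auto.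
    pose proof (atan_bound (a / sqrt s)). lra. }
  assert (Hs0 : s = 0) by (apply sqrt_eq_0; auto).
  split; auto.
  unfold psi2 in H2. rewrite Har, Hsq, Hs0 in H2.
  assert (E : / d * (a ^ 2 + 0 + 1 - 4 * 0 / PI - 4 * a / PI * (PI / 2)) + 0 = / d * (a - 1) ^ 2)
    by (field; lra).
  rewrite E in H2.
  apply Rmult_integral in H2. destruct H2 as [H2|H2].
  - pose proof (Rinv_neq_0_compat d). lra.
  - assert (a - 1 = 0) by (apply (pow_eq_zero_pos _ 1) || nra). lra.
Qed.

Lemma step_up (a s d lam e : R) : 0 < d -> 0 < lam -> d * lam ^ 2 = lam + 4 / PI ^ 2 ->
  0 < e -> 0 < a <= 1 -> 0 <= s -> 1 <= (1 + e) * a ^ 2 ->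
  0 < psi1 a s <= 1 /\ 0 <= psi2 a s d 0 /\
  (1 - psi1 a s) ^ 2 + lam * d * psi2 a s d 0 <= (1 + e) * lam * ((1 - a) ^ 2 + lam * d * s).
Proof.
  intros Hd Hl Hlam He Ha Hs Hae. pose proof PI_gt3.
  pose proof (psi2_nonneg a s d Hs Hd) as Hnn.
  destruct (rep a s d) as [E1 E2]; try lra.
  set (sg := sqrt s) in *.
  assert (Hsg : 0 <= sg) by apply sqrt_pos.
  assert (Hss : s = sg ^ 2) by (unfold sg; simpl; rewrite Rmult_1_r, sqrt_sqrt; lra).
  set (y := sg / a) in *.
  assert (Hy : 0 <= y) by (unfold y; unfold Rdiv; apply Rmult_le_pos; [lra|left; apply Rinv_0_lt_compat; lra]).
  assert (Hsy : sg = a * y) by (unfold y; field; lra).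
  set (ph := atan y) in *.
  destruct (atan_mvt y Hy) as [Hl1 Hl2]. fold ph in Hl1, Hl2.
  assert (Hph0 : 0 <= ph).
  { apply Rle_trans with (y / (1 + y ^ 2)); auto.
    unfold Rdiv; apply Rmult_le_pos; [lra|left; apply Rinv_0_lt_compat; nra]. }
  assert (Hphb : ph < PI / 2) by (pose proof (atan_bound y); unfold ph; lra).
  assert (Hk : 0 < 2 / PI) by (apply Rdiv_lt_0_compat; lra).
  assert (Hkp : 2 / PI * ph < 1).
  { apply Rlt_le_trans with (2 / PI * (PI / 2)). apply Rmult_lt_compat_l; lra. right; field; lra. }
  split; [rewrite E1; split; nra|].
  split; [exact Hnn|].
  assert (Hd' : d * psi2 a s d 0 = (1 - a) ^ 2 + s - 4 / PI * (sg - a * ph)) by (rewrite E2; field; lra).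
  assert (H4p : 0 < 4 / PI) by (apply Rdiv_lt_0_compat; lra).
  assert (Hdiff : 0 <= sg - a * ph) by nra.
  assert (Hds : d * psi2 a s d 0 <= (1 - a) ^ 2 + s) by nra.
  assert (Hq : (1 - psi1 a s) ^ 2 = 4 / PI ^ 2 * ph ^ 2) by (rewrite E1; field; lra).
  assert (Hkk : 0 < 4 / PI ^ 2) by (apply Rdiv_lt_0_compat; nra).
  assert (Hph2 : ph ^ 2 <= y ^ 2) by nra.
  assert (Hy2 : y ^ 2 <= (1 + e) * s).
  { rewrite Hss, Hsy. replace ((1 + e) * (a * y) ^ 2) with (((1 + e) * a ^ 2) * y ^ 2) by ring.
    pose proof (pow2_ge_0 y). nra. }
  assert (Hq2 : (1 - psi1 a s) ^ 2 <= 4 / PI ^ 2 * ((1 + e) * s)) by (rewrite Hq; nra).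
  assert (Hl3 : lam * d * psi2 a s d 0 <= lam * ((1 - a) ^ 2 + s)).
  { rewrite Rmult_assoc. apply Rmult_le_compat_l; lra. }
  assert (Hsa : 0 <= (1 - a) ^ 2) by apply pow2_ge_0.
  assert (Hex : (1 + e) * lam * ((1 - a) ^ 2 + lam * d * s) =
                (1 + e) * lam * (1 - a) ^ 2 + (1 + e) * (lam + 4 / PI ^ 2) * s)
    by (rewrite <- Hlam; ring).
  rewrite Hex.
  assert (0 <= e * lam * (1 - a) ^ 2) by (apply Rmult_le_pos; nra).
  assert (0 <= e * lam * s) by (apply Rmult_le_pos; nra).
  nra.
Qed.

Lemma step_down (a s d lam e : R) : 0 < d -> 0 < lam -> d * lam ^ 2 = lam + 4 / PI ^ 2 ->
  0 < e < 1 -> 1 / 2 <= a -> 0 <= s -> 2 * sqrt s <= e * a ^ 2 ->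
  (1 - e) * (a ^ 2 + s) ^ 2 <= a ^ 2 ->
  (1 - e) * lam * ((1 - a) ^ 2 + lam * d * s) <= (1 - psi1 a s) ^ 2 + lam * d * psi2 a s d 0.
Proof.
  intros Hd Hl Hlam He Ha Hs Hsig Hsq. pose proof PI_gt3.
  destruct (rep a s d) as [E1 E2]; try lra.
  set (sg := sqrt s) in *.
  assert (Hsg : 0 <= sg) by apply sqrt_pos.
  assert (Hss : s = sg ^ 2) by (unfold sg; simpl; rewrite Rmult_1_r, sqrt_sqrt; lra).
  set (y := sg / a) in *.
  assert (Hy : 0 <= y) by (unfold y; unfold Rdiv; apply Rmult_le_pos; [lra|left; apply Rinv_0_lt_compat; lra]).
  assert (Hsy : sg = a * y) by (unfold y; field; lra).
  set (ph := atan y) in *.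
  destruct (atan_mvt y Hy) as [Hl1 Hl2]. fold ph in Hl1, Hl2.
  assert (Ht : 0 < 1 + y ^ 2) by nra.
  assert (Hu : y <= ph * (1 + y ^ 2)).
  { apply (Rmult_le_reg_r (/ (1 + y ^ 2))). apply Rinv_0_lt_compat; lra.
    replace (ph * (1 + y ^ 2) * / (1 + y ^ 2)) with ph by (field; lra). exact Hl1. }
  assert (Hph0 : 0 <= ph) by nra.
  assert (Hsay : s = a ^ 2 * y ^ 2) by (rewrite Hss, Hsy; ring).
  assert (Hc : (1 - e) * a ^ 2 * (1 + y ^ 2) ^ 2 <= 1).
  { assert (Ea : (a ^ 2 + s) ^ 2 = a ^ 2 * (a ^ 2 * (1 + y ^ 2) ^ 2)) by (rewrite Hsay; ring).
    rewrite Ea in Hsq.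
    apply (Rmult_le_reg_l (a ^ 2)). nra. nra. }
  assert (Hb1 : (1 - e) * s <= ph ^ 2).
  { rewrite Hsay.
    apply (Rmult_le_reg_r ((1 + y ^ 2) ^ 2)). nra.
    apply Rle_trans with (y ^ 2).
    - replace ((1 - e) * (a ^ 2 * y ^ 2) * (1 + y ^ 2) ^ 2) with
        (((1 - e) * a ^ 2 * (1 + y ^ 2) ^ 2) * y ^ 2) by ring.
      pose proof (pow2_ge_0 y). nra.
    - replace (ph ^ 2 * (1 + y ^ 2) ^ 2) with ((ph * (1 + y ^ 2)) ^ 2) by ring.
      nra. }
  assert (Hq : (1 - psi1 a s) ^ 2 = 4 / PI ^ 2 * ph ^ 2) by (rewrite E1; field; lra).
  assert (Hkk : 0 < 4 / PI ^ 2) by (apply Rdiv_lt_0_compat; nra).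
  assert (Hq1 : 4 / PI ^ 2 * ((1 - e) * s) <= (1 - psi1 a s) ^ 2) by (rewrite Hq; nra).
  assert (Hy3 : y - ph <= y ^ 3).
  { assert (ph * y ^ 2 <= y * y ^ 2) by (pose proof (pow2_ge_0 y); nra). nra. }
  assert (H4 : 4 / PI <= 2).
  { apply (Rmult_le_reg_r PI); [lra|]. unfold Rdiv. rewrite Rmult_assoc, Rinv_l; lra. }
  assert (H4p : 0 < 4 / PI) by (apply Rdiv_lt_0_compat; lra).
  assert (Hdf : 0 <= sg - a * ph) by (rewrite Hsy; nra).
  assert (Hb2 : 4 / PI * (sg - a * ph) <= e * s).
  { apply Rle_trans with (2 * (sg - a * ph)).
    - apply Rmult_le_compat_r; lra.
    - assert (sg - a * ph <= a * y ^ 3) by (rewrite Hsy; nra).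
      assert (2 * (a * y ^ 3) <= e * s).
      { rewrite Hsay. replace (2 * (a * y ^ 3)) with ((2 * (a * y)) * y ^ 2) by ring.
        replace (e * (a ^ 2 * y ^ 2)) with ((e * a ^ 2) * y ^ 2) by ring.
        rewrite <- Hsy. apply Rmult_le_compat_r; [apply pow2_ge_0|lra]. }
      lra. }
  assert (Hd' : d * psi2 a s d 0 = (1 - a) ^ 2 + s - 4 / PI * (sg - a * ph)) by (rewrite E2; field; lra).
  assert (Hl3 : lam * ((1 - a) ^ 2 + (1 - e) * s) <= lam * d * psi2 a s d 0).
  { rewrite Rmult_assoc. apply Rmult_le_compat_l; lra. }
  assert (Hex : (1 - e) * lam * ((1 - a) ^ 2 + lam * d * s) =
                (1 - e) * lam * (1 - a) ^ 2 + (1 - e) * (lam + 4 / PI ^ 2) * s)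
    by (rewrite <- Hlam; ring).
  rewrite Hex. destruct He as [He1 He2].
  assert (0 <= e * lam * (1 - a) ^ 2) by (apply Rmult_le_pos; [apply Rmult_le_pos; lra | apply pow2_ge_0]).
  nra.
Qed.

Lemma lam_exists (d : R) : 0 < d ->
  exists lam, 0 < lam /\ d * lam ^ 2 = lam + 4 / PI ^ 2 /\
    (d > 1 + 4 / PI ^ 2 -> lam < 1) /\ (d < 1 + 4 / PI ^ 2 -> 1 < lam).
Proof.
  intros Hd. pose proof PI_gt3.
  set (k := 4 / PI ^ 2).
  assert (Hk : 0 < k) by (unfold k; apply Rdiv_lt_0_compat; nra).
  set (r := sqrt (1 + 4 * k * d)).
  assert (Hr2 : r * r = 1 + 4 * k * d) by (unfold r; apply sqrt_sqrt; nra).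
  assert (Hr0 : 0 <= r) by apply sqrt_pos.
  exists ((1 + r) / (2 * d)).
  assert (H2 : 2 * d * ((1 + r) / (2 * d)) = 1 + r) by (field; lra).
  set (lam := (1 + r) / (2 * d)) in *.
  repeat split.
  - unfold lam. apply Rdiv_lt_0_compat; lra.
  - apply (Rmult_eq_reg_l (4 * d)); [|lra].
    replace (4 * d * (d * lam ^ 2)) with ((2 * d * lam) ^ 2) by ring.
    replace (4 * d * (lam + k)) with (2 * (2 * d * lam) + 4 * k * d) by ring.
    rewrite H2. nra.
  - intros H1. assert (1 + r < 2 * d) by nra. nra.
  - intros H1. assert (2 * d < 1 + r) by (destruct (Rlt_or_le (2 * d - 1) 0); nra). nra.
Qed.

Lemma pow_le1 (x : R) (n : nat) : 0 <= x <= 1 -> x ^ n <= 1.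
Proof. intros H. induction n; simpl; nra. Qed.

Lemma pow_nonneg' (x : R) (n : nat) : 0 <= x -> 0 <= x ^ n.
Proof. intros H. induction n; simpl; nra. Qed.

Lemma bernoulli (x : R) (n : nat) : 0 <= x -> 1 + INR n * x <= (1 + x) ^ n.
Proof.
  intros H. induction n.
  - simpl. lra.
  - rewrite S_INR. simpl. pose proof (pos_INR n). nra.
Qed.

Lemma SE_fst (d a0 s0 : R) (t : nat) :
  fst (SE d 0 a0 s0 (S t)) = psi1 (fst (SE d 0 a0 s0 t)) (snd (SE d 0 a0 s0 t)).
Proof. reflexivity. Qed.

Lemma SE_snd (d a0 s0 : R) (t : nat) :
  snd (SE d 0 a0 s0 (S t)) = psi2 (fst (SE d 0 a0 s0 t)) (snd (SE d 0 a0 s0 t)) d 0.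
Proof. reflexivity. Qed.

Lemma SE_nonneg (d a0 s0 : R) (t : nat) : 0 < d -> 0 <= s0 -> 0 <= snd (SE d 0 a0 s0 t).
Proof.
  intros Hd Hs. induction t; [exact Hs|]. rewrite SE_snd. apply psi2_nonneg; auto.
Qed.

Lemma part2 (d : R) : d > delta_global ->
     exists eps1 eps2 : R, 0 < eps1 /\ 0 < eps2 /\
       forall alpha0 s0 : R,
         1 - eps1 < alpha0 < 1 -> 0 < s0 < eps2 ->
         Un_cv (fun t => fst (SE d 0 alpha0 s0 t)) 1 /\
         Un_cv (fun t => snd (SE d 0 alpha0 s0 t)) 0.
Proof.
  unfold delta_global. intros Hdg. pose proof PI_gt3.
  assert (Hk : 0 < 4 / PI ^ 2) by (apply Rdiv_lt_0_compat; nra).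
  assert (Hd : 0 < d) by lra.
  destruct (lam_exists d Hd) as [lam [Hl [Hlam [Hlt _]]]].
  specialize (Hlt Hdg).
  set (e := (1 - lam) / (2 * lam)).
  assert (He : 0 < e) by (unfold e; apply Rdiv_lt_0_compat; lra).
  set (rho := (1 + e) * lam).
  assert (Hrho : rho = (1 + lam) / 2) by (unfold rho, e; field; lra).
  set (m := 2 * lam / (1 + lam)).
  assert (Hm : m * (1 + e) = 1) by (unfold m, e; field; lra).
  assert (Hm0 : 0 < m) by (unfold m; apply Rdiv_lt_0_compat; lra).
  assert (Hm1 : m < 1).
  { unfold m. apply (Rmult_lt_reg_r (1 + lam)); [lra|].
    unfold Rdiv. rewrite Rmult_assoc, Rinv_l; lra. }
  set (R0 := ((1 - m) / 2) ^ 2).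
  assert (HR0 : 0 < R0) by (unfold R0; nra).
  set (c := lam * d).
  assert (Hc : 0 < c) by (unfold c; nra).
  exists (Rmin 1 (R0 / 2)), (R0 / (2 * c)).
  split; [apply Rmin_glb_lt; lra|].
  split; [apply Rdiv_lt_0_compat; lra|].
  intros a0 s0 Ha0 Hs0.
  set (a := fun t => fst (SE d 0 a0 s0 t)).
  set (s := fun t => snd (SE d 0 a0 s0 t)).
  set (V := fun t => (1 - a t) ^ 2 + c * s t).
  assert (Hmin1 : Rmin 1 (R0 / 2) <= 1) by apply Rmin_l.
  assert (Hmin2 : Rmin 1 (R0 / 2) <= R0 / 2) by apply Rmin_r.
  assert (HV0 : V 0%nat < R0).
  { unfold V, a, s. simpl.
    assert ((1 - a0) ^ 2 <= 1 - a0) by nra.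
    assert (c * s0 < R0 / 2).
    { apply (Rmult_lt_reg_r (/ c)). apply Rinv_0_lt_compat; lra.
      replace (c * s0 * / c) with s0 by (field; lra).
      replace (R0 / 2 * / c) with (R0 / (2 * c)) by (field; lra). lra. }
    lra. }
  assert (HV0p : 0 <= V 0%nat).
  { unfold V, a, s. simpl. nra. }
  assert (Hrho1 : rho < 1) by lra.
  assert (Hrho0 : 0 <= rho) by lra.
  assert (Inv : forall t, 0 < a t <= 1 /\ 0 <= s t /\ V t <= rho ^ t * V 0%nat).
  { induction t as [|t [[Ha1 Ha2] [Hst HVt]]].
    - unfold a, s. simpl. split; [|split]; try lra.
    - assert (HVR : V t < R0).
      { pose proof (pow_le1 rho t (conj Hrho0 (Rlt_le _ _ Hrho1))). nra. }
      assert (Hat : (1 - a t) ^ 2 < R0).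
      { unfold V in HVR. assert (0 <= c * s t) by nra. lra. }
      assert (Hat2 : 1 - a t < (1 - m) / 2).
      { unfold R0 in Hat. nra. }
      assert (Hae : 1 <= (1 + e) * a t ^ 2).
      { assert (m <= a t ^ 2) by nra. nra. }
      destruct (step_up (a t) (s t) d lam e Hd Hl Hlam He (conj Ha1 Ha2) Hst Hae)
        as [Hn1 [Hn2 Hn3]].
      assert (Ea : a (S t) = psi1 (a t) (s t)) by reflexivity.
      assert (Es : s (S t) = psi2 (a t) (s t) d 0) by reflexivity.
      change (V (S t)) with ((1 - a (S t)) ^ 2 + c * s (S t)).
      change (V t) with ((1 - a t) ^ 2 + c * s t) in HVt.
      rewrite Ea, Es.
      split; [exact Hn1|]. split; [exact Hn2|].
      unfold c in HVt |- *.
      apply Rle_trans with (rho * ((1 - a t) ^ 2 + lam * d * s t)).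
      + unfold rho. exact Hn3.
      + replace (rho ^ S t * V 0%nat) with (rho * (rho ^ t * V 0%nat)) by (simpl; ring).
        apply Rmult_le_compat_l; lra. }
  split.
  - intros eps Heps.
    destruct (pow_lt_1_zero rho ltac:(rewrite Rabs_right; lra) (eps ^ 2 / (V 0%nat + 1)))
      as [N HN].
    { apply Rdiv_lt_0_compat; nra. }
    exists N. intros n Hn. specialize (HN n Hn).
    rewrite Rabs_right in HN by (apply Rle_ge, pow_nonneg'; lra).
    destruct (Inv n) as [[Ha1 Ha2] [Hsn HVn]].
    assert (Hp : rho ^ n * (V 0%nat + 1) < eps ^ 2).
    { apply (Rmult_lt_reg_r (/ (V 0%nat + 1))). apply Rinv_0_lt_compat; lra.
      replace (rho ^ n * (V 0%nat + 1) * / (V 0%nat + 1)) with (rho ^ n) by (field; lra).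
      exact HN. }
    assert (Hq : (1 - a n) ^ 2 < eps ^ 2).
    { change (V n) with ((1 - a n) ^ 2 + c * s n) in HVn. pose proof (pow_nonneg' rho n Hrho0).
      assert (0 <= c * s n) by (apply Rmult_le_pos; lra).
      assert (rho ^ n * V 0%nat <= rho ^ n * (V 0%nat + 1)) by (apply Rmult_le_compat_l; lra).
      lra. }
    unfold Rdist. fold (a n). rewrite Rabs_left1 by lra.
    nra.
  - intros eps Heps.
    destruct (pow_lt_1_zero rho ltac:(rewrite Rabs_right; lra) (eps * c / (V 0%nat + 1)))
      as [N HN].
    { apply Rdiv_lt_0_compat; nra. }
    exists N. intros n Hn. specialize (HN n Hn).
    rewrite Rabs_right in HN by (apply Rle_ge, pow_nonneg'; lra).
    destruct (Inv n) as [[Ha1 Ha2] [Hsn HVn]].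
    assert (Hp : rho ^ n * (V 0%nat + 1) < eps * c).
    { apply (Rmult_lt_reg_r (/ (V 0%nat + 1))). apply Rinv_0_lt_compat; lra.
      replace (rho ^ n * (V 0%nat + 1) * / (V 0%nat + 1)) with (rho ^ n) by (field; lra).
      exact HN. }
    assert (Hq : c * s n < eps * c).
    { change (V n) with ((1 - a n) ^ 2 + c * s n) in HVn. pose proof (pow_nonneg' rho n Hrho0). pose proof (pow2_ge_0 (1 - a n)).
      assert (rho ^ n * V 0%nat <= rho ^ n * (V 0%nat + 1)) by (apply Rmult_le_compat_l; lra).
      lra. }
    unfold Rdist. fold (s n). rewrite Rminus_0_r, Rabs_right by lra.
    nra.
Qed.

Lemma part3 (d : R) : 0 < d -> d < delta_global ->
     forall alpha0 s0 : R, 0 <= s0 -> (alpha0, s0) <> (0, 0) ->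
       Un_cv (fun t => fst (SE d 0 alpha0 s0 t)) 1 ->
       Un_cv (fun t => snd (SE d 0 alpha0 s0 t)) 0 ->
       alpha0 = 1 /\ s0 = 0.
Proof.
  unfold delta_global. intros Hd Hdg a0 s0 Hs0 _ Hca Hcs. pose proof PI_gt3.
  destruct (lam_exists d Hd) as [lam [Hl [Hlam [_ Hgt]]]].
  specialize (Hgt Hdg).
  set (e := (lam - 1) / (2 * lam)).
  assert (He : 0 < e < 1 / 2).
  { unfold e. split. apply Rdiv_lt_0_compat; lra.
    apply (Rmult_lt_reg_r (2 * lam)); [lra|].
    unfold Rdiv. rewrite Rmult_assoc, Rinv_l; lra. }
  set (rho := (1 - e) * lam).
  assert (Hrho : rho = (1 + lam) / 2) by (unfold rho, e; field; lra).
  set (eta := e / 8).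
  set (c := lam * d).
  assert (Hc : 0 < c) by (unfold c; nra).
  set (a := fun t => fst (SE d 0 a0 s0 t)).
  set (s := fun t => snd (SE d 0 a0 s0 t)).
  set (V := fun t => (1 - a t) ^ 2 + c * s t).
  assert (Hsn : forall t, 0 <= s t) by (intros; apply SE_nonneg; auto).
  destruct (Hca eta) as [N1 HN1]. unfold eta; lra.
  destruct (Hcs (eta ^ 2)) as [N2 HN2]. unfold eta; nra.
  set (N := max N1 N2).
  assert (Reg : forall n, (n >= N)%nat -> Rabs (a n - 1) < eta /\ s n < eta ^ 2).
  { intros n Hn. split.
    - apply HN1. unfold N in Hn. lia.
    - assert (Hh : Rdist (s n) 0 < eta ^ 2) by (apply HN2; unfold N in Hn; lia).
      unfold Rdist in Hh. rewrite Rminus_0_r in Hh.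
      apply Rle_lt_trans with (Rabs (s n)); [apply RRle_abs|exact Hh]. }
  assert (Grow : forall n, (n >= N)%nat -> rho * V n <= V (S n)).
  { intros n Hn. destruct (Reg n Hn) as [Ha Hs]. apply Rabs_def2 in Ha.
    pose proof (Hsn n) as Hs'.
    assert (Hsq : sqrt (s n) <= eta).
    { rewrite <- (sqrt_pow2 eta) by (unfold eta; lra). apply sqrt_le_1_alt. lra. }
    assert (Hah : 1 / 2 <= a n) by (unfold eta in Ha; lra).
    assert (Hc1 : 2 * sqrt (s n) <= e * a n ^ 2).
    { assert (1 / 4 <= a n ^ 2) by nra. unfold eta in Hsq. nra. }
    assert (Hc2 : (1 - e) * (a n ^ 2 + s n) ^ 2 <= a n ^ 2).
    { assert (H1 : a n ^ 2 + s n <= a n * (1 + e / 4)).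
      { assert (s n <= eta * a n) by (unfold eta in *; nra). unfold eta in *. nra. }
      assert (H2 : 0 <= a n ^ 2 + s n) by nra.
      assert (H3 : (a n ^ 2 + s n) ^ 2 <= a n ^ 2 * (1 + e / 4) ^ 2).
      { replace (a n ^ 2 * (1 + e / 4) ^ 2) with ((a n * (1 + e / 4)) ^ 2) by ring.
        apply pow_incr. lra. }
      assert (H4 : (1 - e) * (1 + e / 4) ^ 2 <= 1) by nra.
      assert (H5 : 0 <= a n ^ 2) by nra.
      nra. }
    pose proof (step_down (a n) (s n) d lam e Hd Hl Hlam ltac:(lra) Hah Hs' Hc1 Hc2) as Hst.
    change (V (S n)) with ((1 - psi1 (a n) (s n)) ^ 2 + c * psi2 (a n) (s n) d 0).
    unfold V, c, rho. exact Hst. }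
  assert (GrowJ : forall j, rho ^ j * V N <= V (N + j)%nat).
  { induction j.
    - rewrite Nat.add_0_r. simpl. lra.
    - rewrite Nat.add_succ_r.
      apply Rle_trans with (rho * V (N + j)%nat).
      + replace (rho ^ S j * V N) with (rho * (rho ^ j * V N)) by (simpl; ring).
        apply Rmult_le_compat_l; lra.
      + apply Grow. lia. }
  assert (Bnd : forall j, V (N + j)%nat <= eta ^ 2 + c * eta ^ 2).
  { intros j. destruct (Reg (N + j)%nat ltac:(lia)) as [Ha Hs].
    apply Rabs_def2 in Ha. unfold V.
    assert ((1 - a (N + j)%nat) ^ 2 <= eta ^ 2) by nra.
    assert (c * s (N + j)%nat <= c * eta ^ 2) by (apply Rmult_le_compat_l; lra).
    lra. }
  assert (HVN0 : 0 <= V N).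
  { unfold V. pose proof (Hsn N). pose proof (pow2_ge_0 (1 - a N)).
    assert (0 <= c * s N) by (apply Rmult_le_pos; lra). lra. }
  assert (HVN : V N = 0).
  { destruct (Req_dec (V N) 0) as [E|E]; auto. exfalso.
    destruct (INR_archimed ((rho - 1) * V N) (eta ^ 2 + c * eta ^ 2)) as [j Hj].
    { apply Rlt_gt, Rmult_lt_0_compat; lra. }
    pose proof (bernoulli (rho - 1) j ltac:(lra)) as Hb.
    replace (1 + (rho - 1)) with rho in Hb by ring.
    pose proof (GrowJ j). pose proof (Bnd j).
    assert ((1 + INR j * (rho - 1)) * V N <= rho ^ j * V N) by (apply Rmult_le_compat_r; lra).
    nra. }
  assert (HP : a N = 1 /\ s N = 0).
  { unfold V in HVN. pose proof (Hsn N). pose proof (pow2_ge_0 (1 - a N)).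
    assert (s N = 0) by nra. split; [|auto].
    assert ((1 - a N) ^ 2 = 0) by nra. assert (1 - a N = 0) by (apply (pow_eq_zero_pos _ 1) || nra). lra. }
  assert (Back : forall m, a (S m) = 1 /\ s (S m) = 0 -> a m = 1 /\ s m = 0).
  { intros m [H1 H2]. apply (back (a m) (s m) d); auto. }
  assert (All : forall n, a n = 1 /\ s n = 0 -> a 0%nat = 1 /\ s 0%nat = 0).
  { induction n; auto. }
  apply All in HP. exact HP.
Qed.

Theorem mainTheorem5 :
  (* (1,0) is a fixed point of the real SE map when sigma_w^2 = 0 *)
  (forall delta : R, 0 < delta ->
     psi1 1 0 = 1 /\ psi2 1 0 delta 0 = 0) /\
  (* local convergence above delta_global *)
  (forall delta : R, delta > delta_global ->
     exists eps1 eps2 : R, 0 < eps1 /\ 0 < eps2 /\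
       forall alpha0 s0 : R,
         1 - eps1 < alpha0 < 1 -> 0 < s0 < eps2 ->
         Un_cv (fun t => fst (SE delta 0 alpha0 s0 t)) 1 /\
         Un_cv (fun t => snd (SE delta 0 alpha0 s0 t)) 0) /\
  (* no convergence to (1,0) below delta_global, except from (1,0) itself *)
  (forall delta : R, 0 < delta -> delta < delta_global ->
     forall alpha0 s0 : R, 0 <= s0 -> (alpha0, s0) <> (0, 0) ->
       Un_cv (fun t => fst (SE delta 0 alpha0 s0 t)) 1 ->
       Un_cv (fun t => snd (SE delta 0 alpha0 s0 t)) 0 ->
       alpha0 = 1 /\ s0 = 0).
Proof.
  split; [|split; [exact part2|exact part3]].
  intros delta Hd. pose proof PI_gt3.
  unfold psi1, psi2, arctan_ratio, sgn. rewrite sqrt_0.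
  destruct (Req_EM_T 0 0); [|lra].
  destruct (Rlt_dec 0 1); [|lra].
  split; field; lra.
Qed.
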